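(* Let $m,n\ge0$, $0\le k\le\min(m,n)$, and let $i,j$ be integers with $0\le i\le m$, $0\le j\le n$, $k\le i+j\le m+n-k$. Put $m'=n-k+i$, $n'=m-k+j$, $k'=i+j-k$. Then $$\binom{m+n-k}{m-k,\ n-k,\ k}\,c_{m',n',k'}(i,j)=(-1)^i\binom{m+n-k}{m-i,\ n-j,\ k'}\,c_{m,n,k}(i,j).$$
   Context: Multinomial coefficients: $\binom{a+b+c}{a,\ b,\ c}=\frac{(a+b+c)!}{a!\,b!\,c!}$ for nonnegative $a,b,c$. Let $e,f,h$ be the standard basis of $\mathfrak{sl}(2,\mathbb{C})$. $V(n)$ is the irreducible representation of highest weight $n$ with fixed highest weight vector $\phi_n$; $\{f^i\phi_n\}_{0\le i\le n}$ is a basis, $f^{n+1}\phi_n=0$. $\mathfrak{sl}(2)$ acts on $V(m)\otimes V(n)$ by $X(v\otimes w)=Xv\otimes w+v\otimes Xw$. For any $m,n\ge 0$ and $0\le k\le\min(m,n)$, $\phi_{m,n,k}=\sum_{l=0}^{k}(-1)^l\binom{m-l}{k-l}\binom{n-k+l}{l} f^l\phi_m\otimes f^{k-l}\phi_n\in V(m)\otimes V(n)$ (a highest weight vector of weight $m+n-2k$). The coordinates $c_{m,n,k}(i,j)$ are defined by $f^{p-k}\phi_{m,n,k}=\sum_{i+j=p,\,0\le i\le m,\,0\le j\le n} c_{m,n,k}(i,j)\, f^i\phi_m\otimes f^j\phi_n$ for $k\le p\le m+n-k$. *)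

(* Defs.v *)
From HB Require Import structures.
From mathcomp Require Import all_boot all_order all_algebra.
Set Implicit Arguments. Unset Strict Implicit. Unset Printing Implicit Defensive.
Import Order.TTheory GRing.Theory Num.Theory.
Local Open Scope ring_scope.

Definition multinom (a b c : nat) : nat :=
  ((a + b + c)`! %/ (a`! * b`! * c`!))%N.

(* An element of V(m) (x) V(n) is represented by its coordinates
   v i j = coefficient of f^i phi_m (x) f^j phi_n  (only 0<=i<=m, 0<=j<=n matter). *)
Definition tvec := nat -> nat -> int.

(* Action of f on V(m) (x) V(n):
   f (f^a phi_m (x) f^b phi_n) = f^(a+1) phi_m (x) f^b phi_n + f^a phi_m (x) f^(b+1) phi_n,
   with f^(m+1) phi_m = 0 and f^(n+1) phi_n = 0. *)
Definition fact_f (m n : nat) (v : tvec) : tvec :=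
  fun i j =>
    if ((i <= m)%N && (j <= n)%N) then
      (if (0 < i)%N then v i.-1 j else 0) + (if (0 < j)%N then v i j.-1 else 0)
    else 0.

(* phi_{m,n,k} = sum_{l=0}^k (-1)^l C(m-l,k-l) C(n-k+l,l) f^l phi_m (x) f^(k-l) phi_n *)
Definition phi_hw (m n k : nat) : tvec :=
  fun i j =>
    if ((i + j == k)%N && (i <= k)%N) then
      (-1) ^+ i * ('C(m - i, k - i) * 'C(n - k + i, i))%:R
    else 0.

(* c_{m,n,k}(i,j): coefficient of f^i phi_m (x) f^j phi_n in f^(i+j-k) phi_{m,n,k}. *)
Definition coordc (m n k i j : nat) : int :=
  iter (i + j - k) (fact_f m n) (phi_hw m n k) i j.

(* Main.v *)
Require Import Defs.
From HB Require Import structures.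
From mathcomp Require Import all_boot all_order all_algebra.
From mathcomp Require Import zify ring.
Import Order.TTheory GRing.Theory Num.Theory.
Local Open Scope ring_scope.

Definition Dp (t a b i j : nat) : nat :=
  if ((a <= i)%N && (b <= j)%N && ((i - a) + (j - b) == t)%N) then 'C(t, i - a) else 0%N.

Lemma Dp_pascal t a b i j :
  Dp t.+1 a b i j = ((if (0 < i)%N then Dp t a b i.-1 j else 0) +
                     (if (0 < j)%N then Dp t a b i j.-1 else 0))%N.
Proof.
rewrite /Dp.
case: i => [|i]; case: j => [|j] /=.
- case: ifP => [/andP[/andP[_ _] /eqP]|]; lia.
- case: ifP => [/andP[/andP[H1 H2] /eqP H3]|H].
  + case: ifP => [_|/negP[]]; last by apply/andP; split; [apply/andP; split|apply/eqP]; lia.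
    have -> : (0 - a = 0)%N by lia. by rewrite !bin0.
  + case: ifP => // /andP[/andP[H1 H2] /eqP H3]. exfalso; move/negP: H; apply; apply/andP; split; [apply/andP; split|apply/eqP]; lia.
- case: ifP => [/andP[/andP[H1 H2] /eqP H3]|H].
  + case: ifP => [_|/negP[]]; last by apply/andP; split; [apply/andP; split|apply/eqP]; lia.
    have -> : (i.+1 - a = t.+1)%N by lia. have -> : (i - a = t)%N by lia. by rewrite !binn.
  + case: ifP => // /andP[/andP[H1 H2] /eqP H3]. exfalso; move/negP: H; apply; apply/andP; split; [apply/andP; split|apply/eqP]; lia.
- case: (leqP a i) => Hai; case: (leqP b j) => Hbj /=.
  + have E1 : (a <= i.+1)%N by lia. have E2 : (b <= j.+1)%N by lia.
    rewrite E1 E2 /=.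
    have -> : (i.+1 - a = (i - a).+1)%N by lia.
    have -> : (j.+1 - b = (j - b).+1)%N by lia.
    rewrite binS !addnS !addSn !eqSS.
    case: ifP => // _; by rewrite addnC.
  + case: (leqP b j.+1) => Hb2 /=; last by rewrite /= ?andbF.
    have Hb : (b = j.+1)%N by lia. subst b.
    have -> : (a <= i.+1)%N by lia.
    rewrite andbF subnn !addn0 /=.
    have -> : (i.+1 - a = (i - a).+1)%N by lia.
    rewrite eqSS; case: ifP => // /eqP ->. by rewrite !binn.
  + case: (leqP a i.+1) => Ha2 /=; last by [].
    have Ha : (a = i.+1)%N by lia. subst a.
    have -> : (b <= j.+1)%N by lia.
    rewrite subnn !add0n /=.
    have -> : (j.+1 - b = (j - b).+1)%N by lia.
    rewrite eqSS; case: ifP => // _. by rewrite !bin0.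
  + case: (leqP a i.+1) => Ha2 /=; last by [].
    have Ha : (a = i.+1)%N by lia. subst a.
    case: ifP => // /andP[_ /eqP]; lia.
Qed.

Lemma sum0 K (g : nat -> int) : \sum_(l < K) g l * 0 = 0.
Proof. by rewrite big1 // => l _; rewrite mulr0. Qed.

Lemma iter_closed m n (v : tvec) K (g : nat -> int) (al be : nat -> nat) :
 (forall i j, v i j = \sum_(l < K) g l * (Dp 0 (al l) (be l) i j)%:R) ->
 forall t i j, (i <= m)%N -> (j <= n)%N ->
 iter t (fact_f m n) v i j = \sum_(l < K) g l * (Dp t (al l) (be l) i j)%:R.
Proof.
move=> Hv; elim=> [|t IH] i j Hi Hj; first exact: Hv.
rewrite iterS {1}/fact_f Hi Hj /=.
under eq_bigr => l _ do rewrite Dp_pascal natrD mulrDr.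
rewrite big_split /=.
case: i Hi => [|i] Hi; case: j Hj => [|j] Hj /=.
- by rewrite !sum0 addr0.
- rewrite IH //; last by lia. by rewrite sum0 add0r.
- rewrite IH //; last by lia. by rewrite sum0 addr0.
- by rewrite !IH //; lia.
Qed.

Definition gg (m n k l : nat) : int := (-1) ^+ l * ('C(m - l, k - l) * 'C(n - k + l, l))%:R.

Lemma phi_repr m n k i j :
  phi_hw m n k i j = \sum_(l < k.+1) gg m n k l * (Dp 0 l (k - l) i j)%:R.
Proof.
rewrite /phi_hw; case: ifP => [/andP[/eqP Hij Hik]|H].
- have Hi : (i < k.+1)%N by lia.
  rewrite (bigD1 (Ordinal Hi)) //= big1 ?addr0.
  + rewrite /Dp leqnn subnn add0n.
    have -> : (k - i <= j)%N by lia.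
    have -> : (j - (k - i) == 0)%N by apply/eqP; lia.
    by rewrite bin0 mulr1.
  + move=> l Hl; rewrite /Dp; case: ifP => [/andP[/andP[? ?] /eqP ?]|]; last by rewrite mulr0.
    exfalso; move/eqP: Hl; apply; apply: val_inj => /=. have := ltn_ord l. lia.
- rewrite big1 // => l _; rewrite /Dp; case: ifP => [/andP[/andP[? ?] /eqP ?]|]; last by rewrite mulr0.
  exfalso. have := ltn_ord l. lia.
Qed.

Lemma factR_neq0 n : (n`!%:R : rat) != 0.
Proof. by rewrite pnatr_eq0 -lt0n fact_gt0. Qed.

Lemma binR n m : (m <= n)%N -> ('C(n, m)%:R : rat) = n`!%:R / (m`!%:R * (n - m)`!%:R).
Proof.
move=> H; rewrite -(bin_fact H) !natrM mulfK //.
by rewrite mulf_neq0 // factR_neq0.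
Qed.

Lemma multinomE a b c : (multinom a b c * (a`! * b`! * c`!))%N = (a + b + c)`!.
Proof.
rewrite /multinom divnK //.
have H1 := bin_fact (leq_addr c (a + b)).
have H2 := bin_fact (leq_addr b a).
rewrite addKn in H1. rewrite addKn in H2.
apply/dvdnP; exists ('C(a + b + c, a + b) * 'C(a + b, a))%N.
rewrite -H1 -H2. by rewrite !mulnA.
Qed.

Lemma multR a b c : ((multinom a b c)%:R : rat) =
  (a + b + c)`!%:R / (a`!%:R * b`!%:R * c`!%:R).
Proof.
rewrite -(multinomE a b c) !natrM mulfK //.
by rewrite !mulf_neq0 // factR_neq0.
Qed.


Lemma core m n k i j l : (l <= k)%N -> (l <= i)%N -> (k <= j + l)%N -> (k <= m)%N ->
  (k <= n)%N -> (i <= m)%N -> (j <= n)%N ->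
  (multinom (m - k) (n - k) k * ('C(n - k + l, j + l - k) * 'C(m - l, i - l)) * 'C(k, l)
   = multinom (m - i) (n - j) (i + j - k) * ('C(m - l, k - l) * 'C(n - k + l, l))
     * 'C(i + j - k, i - l))%N.
Proof.
move=> H1 H2 H3 H4 H5 H6 H7.
apply/eqP; rewrite -(eqr_nat rat) !natrM !multR !binR; [|lia..].
have -> : (m - k + (n - k) + k = m + n - k)%N by lia.
have -> : (m - i + (n - j) + (i + j - k) = m + n - k)%N by lia.
have -> : (n - k + l - (j + l - k) = n - j)%N by lia.
have -> : (m - l - (i - l) = m - i)%N by lia.
have -> : (m - l - (k - l) = m - k)%N by lia.
have -> : (n - k + l - l = n - k)%N by lia.
have -> : (i + j - k - (i - l) = j + l - k)%N by lia.
apply/eqP; field.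
by rewrite !factR_neq0.
Qed.

Lemma coord_closed m n k i j : (i <= m)%N -> (j <= n)%N ->
  coordc m n k i j = \sum_(l < k.+1) gg m n k l * (Dp (i + j - k) l (k - l) i j)%:R.
Proof.
move=> Hi Hj; rewrite /coordc.
apply: (@iter_closed m n (phi_hw m n k) k.+1 (gg m n k) (fun l => l) (fun l => k - l)%N) => //.
move=> *; exact: phi_repr.
Qed.

Lemma sum_trunc (K i : nat) (F : nat -> int) : (forall l, (i < l)%N -> F l = 0) ->
  \sum_(l < K.+1) F l = \sum_(l < i.+1) (if (l <= K)%N then F l else 0).
Proof.
move=> HF.
rewrite (big_ord_widen (maxn K i).+1 F); last by lia.
rewrite (big_ord_widen (maxn K i).+1 (fun l => if (l <= K)%N then F l else 0)); last by lia.
rewrite big_mkcond [RHS]big_mkcond; apply: eq_bigr => l _ /=.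
rewrite !ltnS; case: (leqP l K) => h1; case: (leqP l i) => h2 //=; by rewrite HF.
Qed.

Lemma coord_closed2 m n k i j : (i <= m)%N -> (j <= n)%N ->
  coordc m n k i j = \sum_(l < i.+1)
     (if (l <= k)%N then gg m n k l * (Dp (i + j - k) l (k - l) i j)%:R else 0).
Proof.
move=> Hi Hj; rewrite coord_closed //.
rewrite (@sum_trunc k i (fun l => gg m n k l * (Dp (i + j - k) l (k - l) i j)%:R)) //.
move=> l Hl; rewrite /Dp; have -> : (l <= i)%N = false by lia. by rewrite mulr0.
Qed.

Lemma sign_aux (s e x1 a1 b1 x2 a2 b2 : int) : e * e = 1 ->
  x1 * a1 * b1 = x2 * a2 * b2 -> x1 * (s * a1 * b1) = s * e * x2 * (e * a2 * b2).
Proof.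
move=> He H.
transitivity (s * (x1 * a1 * b1)); first ring.
rewrite H. transitivity (s * (e * e) * (x2 * a2 * b2)); last ring.
by rewrite He mulr1.
Qed.

Theorem proposition8p3 (m n k i j : nat) :
  (k <= minn m n)%N -> (i <= m)%N -> (j <= n)%N ->
  (k <= i + j)%N -> (i + j <= m + n - k)%N ->
  (multinom (m - k) (n - k) k)%:Z
    * coordc (n - k + i) (m - k + j) (i + j - k) i j
  = (-1) ^+ i * (multinom (m - i) (n - j) (i + j - k))%:Z * coordc m n k i j.
Proof.
move=> Hk Hi Hj Hk1 Hk2.
have Hkm : (k <= m)%N by lia. have Hkn : (k <= n)%N by lia.
rewrite coord_closed2; [|lia|lia]. rewrite coord_closed2 //.
have -> : (i + j - (i + j - k) = k)%N by lia.
rewrite (reindex_inj rev_ord_inj) /= !mulr_sumr; apply: eq_bigr => l _ /=.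
have Hl := ltn_ord l. rewrite subSS.
move: (nat_of_ord l) Hl => L HL {l}.
have [HC|HC] := boolP ((L <= k)%N && (k <= j + L)%N).
- move/andP: HC => [HC1 HC2].
  have -> : (i - L <= i + j - k)%N by lia. rewrite HC1.
  have -> : Dp k (i - L) (i + j - k - (i - L)) i j = 'C(k, L).
    rewrite /Dp. have -> : (i - L <= i)%N by lia.
    have -> : (i + j - k - (i - L) <= j)%N by lia.
    have -> : (i - (i - L) + (j - (i + j - k - (i - L))) == k)%N by apply/eqP; lia.
    have -> : (i - (i - L) = L)%N by lia. by [].
  have -> : Dp (i + j - k) L (k - L) i j = 'C(i + j - k, i - L).
    rewrite /Dp. have -> : (L <= i)%N by lia.
    have -> : (k - L <= j)%N by lia.
    have -> : (i - L + (j - (k - L)) == i + j - k)%N by apply/eqP; lia.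
    by [].
  rewrite /gg.
  have -> : (n - k + i - (i - L) = n - k + L)%N by lia.
  have -> : (i + j - k - (i - L) = j + L - k)%N by lia.
  have -> : (m - k + j - (i + j - k) + (i - L) = m - L)%N by lia.
  have Es : (-1) ^+ i = (-1) ^+ (i - L) * (-1) ^+ L :> int.
    by rewrite -exprD subnK //; lia.
  rewrite Es. apply: sign_aux.
    by rewrite -exprMn mulrNN mulr1 expr1n.
  rewrite !natz -!PoszM; congr Posz; apply: core; lia.
- rewrite [X in _ * X = _](_ : _ = 0); last first.
    case: ifP => // H1. rewrite /Dp; case: ifP => [/andP[/andP[? ?] /eqP ?]|]; last by rewrite mulr0.
    exfalso; move/negP: HC; apply; apply/andP; split; lia.
  rewrite [X in _ = _ * X](_ : _ = 0); last first.
    case: ifP => // H1. rewrite /Dp; case: ifP => [/andP[/andP[? ?] /eqP ?]|]; last by rewrite mulr0.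
    exfalso; move/negP: HC; apply; apply/andP; split; lia.
  by rewrite !mulr0.
Qed.
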